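(* There exists a $9$-CMS$(9,2)$.
   Context: Let $I_n=\{0,1,\dots,n-1\}$. An $n\times n$ integer matrix is a general magic square if all row sums, column sums, the main diagonal sum and the back diagonal sum (entries $(i,n-1-i)$) are equal. A general magic square $M=(m_{i,j})$ is a general $t$-multimagic square if each entrywise power $M^{*e}=(m_{i,j}^e)$, $e=1,\dots,t$, is a general magic square; if moreover its entries are exactly $0,1,\dots,n^2-1$ it is an MS$(n,t)$. Define $S_e(n)=\frac{1}{n}\sum_{k\in I_{n^2}}k^e$. A family $\{B_0,\dots,B_{m-1}\}$ of MS$(n,t)$s, $B_s=(b^{(s)}_{i,j})$, is an $m$-CMS$(n,t)$ if (R1) $\sum_{s\in I_m}\sum_{j\in I_n}(b^{(s)}_{i,j})^{t+1}=mS_{t+1}(n)$ for every $i$; (R2) $\sum_{s\in I_m}\sum_{i\in I_n}(b^{(s)}_{i,j})^{t+1}=mS_{t+1}(n)$ for every $j$; (R3) $\sum_{s}\sum_{i}(b^{(s)}_{i,i})^{t+1}=\sum_{s}\sum_{i}(b^{(s)}_{i,n-1-i})^{t+1}=mS_{t+1}(n)$. *)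

(* Defs.v *)
From mathcomp Require Import all_boot all_order all_algebra.
Unset Printing Implicit Defensive.
Import GRing.Theory Num.Theory.
Local Open Scope nat_scope.

Definition sqmat (n : nat) := 'I_n -> 'I_n -> nat.

Definition bk {n : nat} (i : 'I_n) : 'I_n := rev_ord i.

Definition magic_pow (n e : nat) (M : sqmat n) : Prop :=
  exists c : nat,
    (forall i : 'I_n, \sum_(j < n) M i j ^ e = c)%N /\
    (forall j : 'I_n, \sum_(i < n) M i j ^ e = c)%N /\
    (\sum_(i < n) M i i ^ e = c)%N /\
    (\sum_(i < n) M i (bk i) ^ e = c)%N.

Definition multimagic (n t : nat) (M : sqmat n) : Prop :=
  forall e : nat, (1 <= e <= t)%N -> magic_pow n e M.

Definition entries_std (n : nat) (M : sqmat n) : Prop :=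
  (forall i j : 'I_n, M i j < n ^ 2)%N /\
  (forall i j i' j' : 'I_n, M i j = M i' j' -> i = i' /\ j = j').

Definition MS (n t : nat) (M : sqmat n) : Prop :=
  multimagic n t M /\ entries_std n M.

Local Open Scope ring_scope.
Definition S_ (e n : nat) : rat :=
  (n%:R)^-1 * (\sum_(k < n ^ 2) (k ^ e)%N%:R).

(* m-CMS(n,t): family B_0..B_{m-1} of MS(n,t) with conditions R1-R3 *)
Definition CMS (m n t : nat) (B : 'I_m -> sqmat n) : Prop :=
  (forall s : 'I_m, MS n t (B s)) /\
  (forall i : 'I_n,
     (\sum_(s < m) \sum_(j < n) (B s i j ^ t.+1)%N%:R : rat) = m%:R * S_ t.+1 n) /\
  (forall j : 'I_n,
     (\sum_(s < m) \sum_(i < n) (B s i j ^ t.+1)%N%:R : rat) = m%:R * S_ t.+1 n) /\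
  (\sum_(s < m) \sum_(i < n) (B s i i ^ t.+1)%N%:R : rat) = m%:R * S_ t.+1 n /\
  (\sum_(s < m) \sum_(i < n) (B s i (bk i) ^ t.+1)%N%:R : rat) = m%:R * S_ t.+1 n.

(* Main.v *)
Require Import Defs.
From mathcomp Require Import all_boot all_order all_algebra.
Import GRing.Theory Num.Theory.

Definition data : seq (seq (seq nat)) :=
[:: [:: [:: 0; 39; 78; 58; 16; 46; 35; 65; 23]; [:: 64; 22; 34; 41; 80; 2; 15; 45; 57]; [:: 47; 59; 17; 21; 33; 63; 79; 1; 40]; [:: 25; 28; 67; 74; 5; 44; 48; 60; 9]; [:: 62; 11; 50; 27; 66; 24; 4; 43; 73]; [:: 42; 72; 3; 10; 49; 61; 68; 26; 29]; [:: 14; 53; 56; 69; 18; 30; 37; 76; 7]; [:: 75; 6; 36; 52; 55; 13; 20; 32; 71]; [:: 31; 70; 19; 8; 38; 77; 54; 12; 51]];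
 [:: [:: 15; 45; 57; 64; 22; 34; 41; 80; 2]; [:: 79; 1; 40; 47; 59; 17; 21; 33; 63]; [:: 35; 65; 23; 0; 39; 78; 58; 16; 46]; [:: 4; 43; 73; 62; 11; 50; 27; 66; 24]; [:: 68; 26; 29; 42; 72; 3; 10; 49; 61]; [:: 48; 60; 9; 25; 28; 67; 74; 5; 44]; [:: 20; 32; 71; 75; 6; 36; 52; 55; 13]; [:: 54; 12; 51; 31; 70; 19; 8; 38; 77]; [:: 37; 76; 7; 14; 53; 56; 69; 18; 30]];
 [:: [:: 21; 33; 63; 79; 1; 40; 47; 59; 17]; [:: 58; 16; 46; 35; 65; 23; 0; 39; 78]; [:: 41; 80; 2; 15; 45; 57; 64; 22; 34]; [:: 10; 49; 61; 68; 26; 29; 42; 72; 3]; [:: 74; 5; 44; 48; 60; 9; 25; 28; 67]; [:: 27; 66; 24; 4; 43; 73; 62; 11; 50]; [:: 8; 38; 77; 54; 12; 51; 31; 70; 19]; [:: 69; 18; 30; 37; 76; 7; 14; 53; 56]; [:: 52; 55; 13; 20; 32; 71; 75; 6; 36]];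
 [:: [:: 28; 67; 25; 5; 44; 74; 60; 9; 48]; [:: 11; 50; 62; 66; 24; 27; 43; 73; 4]; [:: 72; 3; 42; 49; 61; 10; 26; 29; 68]; [:: 53; 56; 14; 18; 30; 69; 76; 7; 37]; [:: 6; 36; 75; 55; 13; 52; 32; 71; 20]; [:: 70; 19; 31; 38; 77; 8; 12; 51; 54]; [:: 39; 78; 0; 16; 46; 58; 65; 23; 35]; [:: 22; 34; 64; 80; 2; 41; 45; 57; 15]; [:: 59; 17; 47; 33; 63; 21; 1; 40; 79]];
 [:: [:: 43; 73; 4; 11; 50; 62; 66; 24; 27]; [:: 26; 29; 68; 72; 3; 42; 49; 61; 10]; [:: 60; 9; 48; 28; 67; 25; 5; 44; 74]; [:: 32; 71; 20; 6; 36; 75; 55; 13; 52]; [:: 12; 51; 54; 70; 19; 31; 38; 77; 8]; [:: 76; 7; 37; 53; 56; 14; 18; 30; 69]; [:: 45; 57; 15; 22; 34; 64; 80; 2; 41]; [:: 1; 40; 79; 59; 17; 47; 33; 63; 21]; [:: 65; 23; 35; 39; 78; 0; 16; 46; 58]];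
 [:: [:: 49; 61; 10; 26; 29; 68; 72; 3; 42]; [:: 5; 44; 74; 60; 9; 48; 28; 67; 25]; [:: 66; 24; 27; 43; 73; 4; 11; 50; 62]; [:: 38; 77; 8; 12; 51; 54; 70; 19; 31]; [:: 18; 30; 69; 76; 7; 37; 53; 56; 14]; [:: 55; 13; 52; 32; 71; 20; 6; 36; 75]; [:: 33; 63; 21; 1; 40; 79; 59; 17; 47]; [:: 16; 46; 58; 65; 23; 35; 39; 78; 0]; [:: 80; 2; 41; 45; 57; 15; 22; 34; 64]];
 [:: [:: 56; 14; 53; 30; 69; 18; 7; 37; 76]; [:: 36; 75; 6; 13; 52; 55; 71; 20; 32]; [:: 19; 31; 70; 77; 8; 38; 51; 54; 12]; [:: 78; 0; 39; 46; 58; 16; 23; 35; 65]; [:: 34; 64; 22; 2; 41; 80; 57; 15; 45]; [:: 17; 47; 59; 63; 21; 33; 40; 79; 1]; [:: 67; 25; 28; 44; 74; 5; 9; 48; 60]; [:: 50; 62; 11; 24; 27; 66; 73; 4; 43]; [:: 3; 42; 72; 61; 10; 49; 29; 68; 26]];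
 [:: [:: 71; 20; 32; 36; 75; 6; 13; 52; 55]; [:: 51; 54; 12; 19; 31; 70; 77; 8; 38]; [:: 7; 37; 76; 56; 14; 53; 30; 69; 18]; [:: 57; 15; 45; 34; 64; 22; 2; 41; 80]; [:: 40; 79; 1; 17; 47; 59; 63; 21; 33]; [:: 23; 35; 65; 78; 0; 39; 46; 58; 16]; [:: 73; 4; 43; 50; 62; 11; 24; 27; 66]; [:: 29; 68; 26; 3; 42; 72; 61; 10; 49]; [:: 9; 48; 60; 67; 25; 28; 44; 74; 5]];
 [:: [:: 77; 8; 38; 51; 54; 12; 19; 31; 70]; [:: 30; 69; 18; 7; 37; 76; 56; 14; 53]; [:: 13; 52; 55; 71; 20; 32; 36; 75; 6]; [:: 63; 21; 33; 40; 79; 1; 17; 47; 59]; [:: 46; 58; 16; 23; 35; 65; 78; 0; 39]; [:: 2; 41; 80; 57; 15; 45; 34; 64; 22]; [:: 61; 10; 49; 29; 68; 26; 3; 42; 72]; [:: 44; 74; 5; 9; 48; 60; 67; 25; 28]; [:: 24; 27; 66; 73; 4; 43; 50; 62; 11]]].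

Definition bn (s i j : nat) : nat := nth 0 (nth [::] (nth [::] data s) i) j.
Definition BB (s : 'I_9) : sqmat 9 := fun i j => bn s i j.

Definition I9 := iota 0 9.

Lemma allI9 {P : pred nat} : all P I9 -> forall i : 'I_9, P i.
Proof. by move=> /allP h i; apply: h; rewrite mem_iota /= ltn_ord. Qed.

Lemma sumI (f : nat -> nat) : \sum_(j < 9) f j = \sum_(0 <= j < 9) f j.
Proof. by rewrite big_mkord. Qed.

Section P.
Local Open Scope ring_scope.
Lemma sum_perm (F : nat -> rat) (g : nat -> nat -> nat) :
  perm_eq [seq g s j | s <- I9, j <- I9] (iota 0 (9^2)) ->
  (\sum_(s < 9) \sum_(j < 9) F (g s j) = \sum_(k < 9^2) F k)%R.
Proof.
move=> hp.
rewrite -(big_mkord xpredT F) /index_iota subn0 -(perm_big _ hp) big_allpairs_dep.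
rewrite -(big_mkord xpredT (fun s => \sum_(j < 9) F (g s j))%R).
apply: eq_bigr => s _; by rewrite -(big_mkord xpredT (fun j => F (g s j))).
Qed.
End P.

Definition magicb (e c s : nat) : bool :=
  all (fun i => \sum_(0 <= j < 9) bn s i j ^ e == c) I9 &&
  all (fun j => \sum_(0 <= i < 9) bn s i j ^ e == c) I9 &&
  (\sum_(0 <= i < 9) bn s i i ^ e == c) && (\sum_(0 <= i < 9) bn s i (8 - i) ^ e == c).

Lemma magicbP e c (s : 'I_9) : magicb e c s -> magic_pow 9 e (BB s).
Proof.
case/andP => /andP [/andP [/allI9 h1 /allI9 h2] /eqP h3] /eqP h4.
exists c; split; [|split; [|split]].
- by move=> i; rewrite /BB (sumI (fun j => bn s i j ^ e)); apply/eqP/h1.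
- by move=> j; rewrite /BB (sumI (fun i => bn s i j ^ e)); apply/eqP/h2.
- by rewrite /BB (sumI (fun i => bn s i i ^ e)).
- rewrite /BB -h4 big_mkord; apply: eq_bigr => i _; by rewrite /bk /= subSS.
Qed.

Definition stdb (s : nat) : bool :=
  all (fun i => all (fun j => bn s i j < 9 ^ 2) I9) I9 &&
  all (fun i => all (fun j => all (fun i' => all (fun j' =>
     (bn s i j == bn s i' j') ==> (i == i') && (j == j')) I9) I9) I9) I9.

Lemma stdbP (s : 'I_9) : stdb s -> entries_std 9 (BB s).
Proof.
case/andP => /allI9 h1 /allI9 h2; split.
  by move=> i j; exact: (allI9 (h1 i) j).
move=> i j i' j' e.
have /implyP := allI9 (allI9 (allI9 (h2 i) j) i') j'.
rewrite /BB in e; rewrite e eqxx => /(_ isT) /andP [/eqP h /eqP h'].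
by split; apply: val_inj.
Qed.

Definition allb : bool :=
  all (fun s => magicb 1 360 s && magicb 2 19320 s && stdb s) I9 &&
  all (fun i => perm_eq [seq bn s i j | s <- I9, j <- I9] (iota 0 (9^2))) I9 &&
  all (fun j => perm_eq [seq bn s i j | s <- I9, i <- I9] (iota 0 (9^2))) I9 &&
  perm_eq [seq bn s i i | s <- I9, i <- I9] (iota 0 (9^2)) &&
  perm_eq [seq bn s i (8 - i) | s <- I9, i <- I9] (iota 0 (9^2)).

Lemma allb_true : allb.
Proof. rewrite /allb /magicb /stdb unlock. vm_compute. reflexivity. Qed.

Section R.
Local Open Scope ring_scope.
Lemma rhs e : (\sum_(k < 9^2) (k ^ e)%N%:R : rat) = 9%:R * S_ e 9.
Proof. by rewrite /S_ mulrA mulfV ?mul1r. Qed.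
End R.

Theorem lemma3p1 : exists B : 'I_9 -> sqmat 9, CMS 9 9 2 B.
Proof.
have := allb_true; case/andP => /andP [/andP [/andP [/allI9 hs /allI9 hr] /allI9 hc] hd] hb.
exists BB; split.
  move=> s; have /andP [/andP [m1 m2] st] := hs s; split; last exact: stdbP.
  move=> e /andP [e1 e2]; case: e e1 e2 => [//|[|[|//]]] _ _.
    exact: magicbP m1.
  exact: magicbP m2.
split; first by move=> i; rewrite -rhs (sum_perm (fun x => ((x ^ 3)%N%:R)%R) (fun s j => bn s i j)).
split; first by move=> j; rewrite -rhs (sum_perm (fun x => ((x ^ 3)%N%:R)%R) (fun s i => bn s i j)).
split; first by rewrite -rhs (sum_perm (fun x => ((x ^ 3)%N%:R)%R) (fun s i => bn s i i)).
rewrite -rhs -(sum_perm (fun x => ((x ^ 3)%N%:R)%R) (fun s i => bn s i (8 - i))) //.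
Qed.
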